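(* For every $X\in\mathfrak{W}'$ and every $l\ge1$, $\lambda(X)L_{z_l}-L_{z_l}\lambda(X)=XL_{z_l}+L_{x^l}X$ as maps on $\mathfrak{H}^1$.
   Context: Let $\mathfrak{H}=\mathbb{Q}\langle x,y\rangle$, $\mathfrak{H}^1=\mathbb{Q}+\mathfrak{H}y$, $\mathfrak{H}^1_n$ its homogeneous part of degree $n$; $L_w(w')=ww'$; products of operators denote composition. Let $z_k=x^{k-1}y$. The harmonic product $\ast$ on $\mathfrak{H}^1$ is the $\mathbb{Q}$-bilinear map with $1\ast w=w\ast1=w$ and $z_kw\ast z_lw'=z_k(w\ast z_lw')+z_l(z_kw\ast w')+z_{k+l}(w\ast w')$; $\mathcal{H}_w(v)=w\ast v$. $\mathfrak{W}$ is the $\mathbb{Q}$-span of the operators $\mathcal{H}_w$ ($w\in\mathfrak{H}^1$) on $\mathfrak{H}^1$; $\mathfrak{W}'$ is the $\mathbb{Q}$-span of the operators $L_{z_k}\mathcal{H}_w$ ($k\ge1$, $w\in\mathfrak{H}^1$) on $\mathfrak{H}^1$. The $L_{z_k}\mathcal{H}_w$ over distinct pairs $(k,w)$, $w$ a word, are linearly independent, and $\lambda:\mathfrak{W}'\to\mathfrak{W}$ is the $\mathbb{Q}$-linear map with $\lambda(L_{z_k}\mathcal{H}_w)=\mathcal{H}_{z_kw}$. *)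

(* Defs.v *)
From HB Require Import structures.
From mathcomp Require Import all_boot all_order all_algebra.
Set Implicit Arguments. Unset Strict Implicit. Unset Printing Implicit Defensive.
Import Order.TTheory GRing.Theory Num.Theory.
Local Open Scope ring_scope.

(* Words in the letters x, y: [false] = x, [true] = y. *)
Definition word := seq bool.

(* Elements of H = Q<x,y> are represented as formal finite Q-linear
   combinations of words; two representatives denote the same element iff
   they have the same coefficient at every word. *)
Definition hpoly := seq (rat * word).

Definition coef (p : hpoly) (u : word) : rat := \sum_(e <- p | e.2 == u) e.1.

Definition peq (p q : hpoly) : Prop := forall u, coef p u = coef q u.

Definition padd (p q : hpoly) : hpoly := p ++ q.
Definition pscale (c : rat) (p : hpoly) : hpoly := [seq (c * e.1, e.2) | e <- p].
Definition psub (p q : hpoly) : hpoly := padd p (pscale (-1) q).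

(* words of H^1 = Q + H y : empty or ending with y *)
Definition wordH1 (w : word) : bool := (w == [::]) || last false w.
Definition inH1 (p : hpoly) : bool := all (fun e => wordH1 e.2) p.

Definition z (k : nat) : word := rcons (nseq k.-1 false) true.
Definition xpow (l : nat) : word := nseq l false.

(* Decomposition of a word of H^1 into its z-letters: w = z_{k1} ... z_{kr} *)
Fixpoint zdec_aux (n : nat) (w : word) : seq nat :=
  match w with
  | [::] => [::]
  | false :: w' => zdec_aux n.+1 w'
  | true :: w' => n.+1 :: zdec_aux 0 w'
  end.
Definition zdec (w : word) : seq nat := zdec_aux 0 w.
Definition zword (s : seq nat) : word := flatten [seq z k | k <- s].

(* Harmonic product on z-words, by the defining recursion
   z_k w * z_l w' = z_k (w * z_l w') + z_l (z_k w * w') + z_(k+l) (w * w'). *)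
Definition consz (k : nat) (p : seq (rat * seq nat)) : seq (rat * seq nat) :=
  [seq (e.1, k :: e.2) | e <- p].

Fixpoint stuffle (a : seq nat) : seq nat -> seq (rat * seq nat) :=
  match a with
  | [::] => fun b => [:: (1, b)]
  | k :: a' =>
      fix st2 (b : seq nat) : seq (rat * seq nat) :=
        match b with
        | [::] => [:: (1, a)]
        | l :: b' => consz k (stuffle a' b) ++ consz l (st2 b')
                       ++ consz (k + l)%N (stuffle a' b')
        end
  end.

Definition harmw (u v : word) : hpoly :=
  [seq (e.1, zword e.2) | e <- stuffle (zdec u) (zdec v)].

Definition op := hpoly -> hpoly.
Definition Lop (w : word) : op := fun p => [seq (e.1, w ++ e.2) | e <- p].
Definition Hop (w : word) : op :=
  fun p => flatten [seq pscale e.1 (harmw w e.2) | e <- p].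

(* An element of W' given as a finite Q-linear combination
   sum_i c_i L_{z_{k_i}} H_{w_i}, with k_i >= 1 and w_i a word of H^1. *)
Definition Wcomb := seq (rat * nat * word).
Definition validW (X : Wcomb) : bool :=
  all (fun t => (0 < t.1.2)%N && wordH1 t.2) X.

Definition Wop (X : Wcomb) : op :=
  fun p => flatten [seq pscale t.1.1 (Lop (z t.1.2) (Hop t.2 p)) | t <- X].

Definition lambda (X : Wcomb) : op :=
  fun p => flatten [seq pscale t.1.1 (Hop (z t.1.2 ++ t.2) p) | t <- X].

(* Main.v *)
Require Import Defs.
From HB Require Import structures.
From mathcomp Require Import all_boot all_order all_algebra.
Import GRing.Theory.

Section Aux.
Local Open Scope ring_scope.

Lemma arith (a b c A B C D : rat) : (a+(b+c)) + (B+(C+D)) = (b+B)+((a+C)+(c+D)).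
Proof. by rewrite (addrACA a C) (addrACA b B) (addrCA a). Qed.

Lemma arith2 (a b c A B C : rat) : (a+(b+c))+(A+(B+C)) = (a+A)+((b+B)+(c+C)).
Proof. by rewrite (addrACA b B) (addrACA a A). Qed.

Lemma coef_cat p q u : coef (p ++ q) u = coef p u + coef q u.
Proof. by rewrite /coef big_cat. Qed.

Lemma coef_nil u : coef [::] u = 0.
Proof. by rewrite /coef big_nil. Qed.

Lemma coef_scale c p u : coef (pscale c p) u = c * coef p u.
Proof. by rewrite /coef big_map mulr_sumr. Qed.

Lemma Lop_cat w p q : Lop w (p ++ q) = Lop w p ++ Lop w q.
Proof. by rewrite /Lop map_cat. Qed.

Lemma Lop_scale w c p : Lop w (pscale c p) = pscale c (Lop w p).
Proof. by rewrite /Lop /pscale -!map_comp. Qed.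

Lemma Lop_Lop a b p : Lop a (Lop b p) = Lop (a ++ b) p.
Proof. by rewrite /Lop -map_comp; apply: eq_map => e /=; rewrite catA. Qed.

Lemma pscale_cat c p q : pscale c (p ++ q) = pscale c p ++ pscale c q.
Proof. by rewrite /pscale map_cat. Qed.

Lemma zdec_aux_nseq n m w :
  zdec_aux n (nseq m false ++ true :: w) = (n + m).+1%N :: zdec_aux 0 w.
Proof.
elim: m n => [|m IH] n /=; first by rewrite addn0.
by rewrite IH addnS.
Qed.

Lemma zdec_z k w : (0 < k)%N -> zdec (z k ++ w) = k :: zdec w.
Proof.
move=> hk; rewrite /zdec /z -cats1 -catA /= zdec_aux_nseq add0n.
by rewrite prednK.
Qed.

Lemma z_add k l : (0 < k)%N -> z (k + l) = xpow l ++ z k.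
Proof.
move=> hk; rewrite /z /xpow -!cats1 catA -nseqD; congr (nseq _ _ ++ _).
by case: k hk => // k _; rewrite addSn /= addnC.
Qed.

Lemma map_consz k s :
  [seq (e.1, zword e.2) | e <- consz k s] = Lop (z k) [seq (e.1, zword e.2) | e <- s].
Proof. by rewrite /consz /Lop -!map_comp. Qed.

Lemma harm_key k l w v : (0 < k)%N -> (0 < l)%N ->
  harmw (z k ++ w) (z l ++ v) =
  Lop (z k) (harmw w (z l ++ v)) ++ Lop (z l) (harmw (z k ++ w) v)
      ++ Lop (xpow l ++ z k) (harmw w v).
Proof.
move=> hk hl; rewrite /harmw !zdec_z //= !map_cat !map_consz -z_add //.
Qed.

Lemma single k w l v u : (0 < k)%N -> (0 < l)%N ->
  coef (Hop (z k ++ w) (Lop (z l) v)) u =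
  coef (Lop (z l) (Hop (z k ++ w) v)) u +
  (coef (Lop (z k) (Hop w (Lop (z l) v))) u +
   coef (Lop (xpow l) (Lop (z k) (Hop w v))) u).
Proof.
move=> hk hl; elim: v => [|e v IH]; first by rewrite /= !coef_nil !addr0.
rewrite /Hop /= -/(Hop _ _) -/(Hop _ _) -/(Lop _ _) -/(Hop _ _) -/(Hop _ _).
rewrite harm_key // !pscale_cat !Lop_cat !Lop_scale !Lop_Lop !coef_cat
  !coef_scale IH.
rewrite !Lop_Lop in IH *.
exact: (@arith _ _ _ 0).
Qed.

End Aux.

Theorem mainTheorem11 (X : Wcomb) (l : nat) :
  validW X -> (0 < l)%N ->
  forall v : hpoly, inH1 v ->
    peq (psub (lambda X (Lop (z l) v)) (Lop (z l) (lambda X v)))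
        (padd (Wop X (Lop (z l) v)) (Lop (xpow l) (Wop X v))).
Proof.
move=> hX hl v _ u.
suff H : coef (lambda X (Lop (z l) v)) u =
  (coef (Lop (z l) (lambda X v)) u +
  (coef (Wop X (Lop (z l) v)) u + coef (Lop (xpow l) (Wop X v)) u))%R.
  by rewrite /psub /padd !coef_cat coef_scale H mulN1r (addrC (coef _ u)) addrK.
elim: X hX => [|[[c k] w] X IH] /=; first by rewrite !coef_nil !addr0.
case/andP => /andP [hk _] hX.
rewrite /lambda /Wop /= -/(lambda _ _) -/(lambda _ _) -/(Wop _ _) -/(Wop _ _).
rewrite !Lop_cat !Lop_scale !coef_cat !coef_scale IH // single //.
rewrite !Lop_Lop !mulrDr.
exact: arith2.
Qed.
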